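(* Let $M$ be a recursively enumerable language over a finite alphabet $\Sigma$. Then: (1) there exists an $\mathcal{E}^{\mathrm{mult}}$-grammar which generates $M$; (2) there exists an $\mathcal{E}^{r,\mathrm{mult}}$-grammar which generates $M$; (3) for each of the calculi $\mathcal{M}^{\mathrm{mult}}_{2015}$, $\mathcal{M}'^{\,\mathrm{mult}}_{2015}$, $\mathcal{F}^{\mathrm{mult}}_{2015}$, $\mathcal{M}^{\mathrm{mult}}_{2018}$, $\mathcal{M}'^{\,\mathrm{mult}}_{2018}$, $\mathcal{F}^{\mathrm{mult}}_{2018}$ there exists a grammar based on that calculus which generates $M$ both in the sense of s-recognition and in the sense of t-recognition.
   Context: Formulae are built from a countable set of variables and $\mathbf1$ by $\backslash,/,\cdot$ (multiplicative fragments: no $\wedge,\vee$) and the unary $\langle\rangle$, $[]^{-1}$, $!$. Bracket-free calculi: sequents $\Pi\to A$ with $\Pi$ a finite (possibly empty, $\Lambda$) sequence of formulae without bracket modalities. $\mathcal{E}^{\mathrm{mult}}$ has axioms $A\to A$, $\Lambda\to\mathbf1$ and rules: ($\backslash L$) from $\Pi\to A$ and $\Delta_1,B,\Delta_2\to C$ infer $\Delta_1,\Pi,A\backslash B,\Delta_2\to C$; ($\backslash R$) from $A,\Pi\to B$ infer $\Pi\to A\backslash B$; ($/L$) from $\Pi\to A$ and $\Delta_1,B,\Delta_2\to C$ infer $\Delta_1,B/A,\Pi,\Delta_2\to C$; ($/R$) from $\Pi,A\to B$ infer $\Pi\to B/A$; ($\cdot L$) from $\Delta_1,A,B,\Delta_2\to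 C$ infer $\Delta_1,A\cdot B,\Delta_2\to C$; ($\cdot R$) from $\Gamma\to A$ and $\Delta\to B$ infer $\Gamma,\Delta\to A\cdot B$; ($\mathbf1L$) from $\Delta_1,\Delta_2\to C$ infer $\Delta_1,\mathbf1,\Delta_2\to C$; ($!R$) from $!A_1,\dots,!A_n\to B$ infer $!A_1,\dots,!A_n\to!B$ ($n\ge0$); ($!L$) from $\Delta_1,A,\Delta_2\to C$ infer $\Delta_1,!A,\Delta_2\to C$; ($!P_1$) from $\Delta_1,!A,\Phi,\Delta_2\to C$ infer $\Delta_1,\Phi,!A,\Delta_2\to C$; ($!P_2$) from $\Delta_1,\Phi,!A,\Delta_2\to C$ infer $\Delta_1,!A,\Phi,\Delta_2\to C$; ($!C$) from $\Delta_1,!A,!A,\Delta_2\to C$ infer $\Delta_1,!A,\Delta_2\to C$; ($!W$) from $\Delta_1,\Delta_2\to C$ infer $\Delta_1,!A,\Delta_2\to C$; (cut) from $\Pi\to A$ and $\Delta_1,A,\Delta_2\to C$ infer $\Delta_1,\Pi,\Delta_2\to C$. $\mathcal{E}^{r,\mathrm{mult}}$ is $\mathcal{E}^{\mathrm{mult}}$ without $!W$. Bracketed calculi with stoups: a stoup is a finite multiset of formulae; a tree term is a formula or $[\Xi]$; a meta-formula is $\zeta;\Gamma$ ($\zeta$ a stoup, $\Gamma$ a finite sequence of tree terms, empty $\Lambda$), $\varnothing;\Gamma$ written $\Gamma$; comma is concatenation / multiset union; sequents $\Xi\to C$; $\Xi(\Theta)$ designates an occurrence of a meta-formula $\Theta$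 which is $\Xi$ itself or the content of a bracket $[\Theta]$ at any depth. Common rules: axioms $A\to A$, $\Lambda\to\mathbf1$; ($/L$) from $\zeta_1;\Gamma\to B$ and $\Xi(\zeta_2;\Delta_1,C,\Delta_2)\to D$ infer $\Xi(\zeta_1,\zeta_2;\Delta_1,C/B,\Gamma,\Delta_2)\to D$; ($/R$) from $\zeta;\Gamma,B\to C$ infer $\zeta;\Gamma\to C/B$; ($\backslash L$) from $\zeta_1;\Gamma\to A$ and $\Xi(\zeta_2;\Delta_1,C,\Delta_2)\to D$ infer $\Xi(\zeta_1,\zeta_2;\Delta_1,\Gamma,A\backslash C,\Delta_2)\to D$; ($\backslash R$) from $\zeta;A,\Gamma\to C$ infer $\zeta;\Gamma\to A\backslash C$; ($\cdot L$) from $\Xi(\zeta;\Delta_1,A,B,\Delta_2)\to D$ infer $\Xi(\zeta;\Delta_1,A\cdot B,\Delta_2)\to D$; ($\cdot R$) from $\zeta_1;\Delta\to A$, $\zeta_2;\Gamma\to B$ infer $\zeta_1,\zeta_2;\Delta,\Gamma\to A\cdot B$; ($\mathbf1L$) from $\Xi(\zeta;\Delta_1,\Delta_2)\to A$ infer $\Xi(\zeta;\Delta_1,\mathbf1,\Delta_2)\to A$; ($[]^{-1}L$) from $\Xi(\zeta;\Delta_1,A,\Delta_2)\to B$ infer $\Xi(\zeta;\Delta_1,[[]^{-1}A],\Delta_2)\to B$; ($[]^{-1}R$) from $[\Xi]\to A$ infer $\Xi\to[]^{-1}A$; ($\langle\rangle L$) from $\Xi(\zeta;\Delta_1,[A],\Delta_2)\to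 B$ infer $\Xi(\zeta;\Delta_1,\langle\rangle A,\Delta_2)\to B$; ($\langle\rangle R$) from $\Xi\to A$ infer $[\Xi]\to\langle\rangle A$; ($!L$) from $\Xi(\zeta,A;\Gamma_1,\Gamma_2)\to B$ infer $\Xi(\zeta;\Gamma_1,!A,\Gamma_2)\to B$; ($!P$) from $\Xi(\zeta;\Gamma_1,A,\Gamma_2)\to B$ infer $\Xi(\zeta,A;\Gamma_1,\Gamma_2)\to B$. $\mathcal{M}^{\mathrm{mult}}_{2015}$ adds ($!R$) from $\zeta;\Lambda\to B$ infer $\zeta;\Lambda\to!B$ and ($!C$) from $\Xi(\zeta_1,\zeta_2;\Gamma_1,[\zeta_2;\Gamma_2],\Gamma_3)\to B$ infer $\Xi(\zeta_1,\zeta_2;\Gamma_1,\Gamma_2,\Gamma_3)\to B$ if $\zeta_2\ne\varnothing$. $\mathcal{M}'^{\,\mathrm{mult}}_{2015}$ adds ($!R'$) as $!R$ but only if $\zeta\ne\varnothing$, and ($!C'$) from $\Xi(\zeta_1,\zeta_2;\Gamma_1,[\zeta',\zeta_2;\Gamma_2],\Gamma_3)\to C$ infer $\Xi(\zeta_1,\zeta_2,\zeta';\Gamma_1,\Gamma_2,\Gamma_3)\to C$ if $\zeta_2\ne\varnothing$. $\mathcal{M}^{\mathrm{mult}}_{2018}$ adds ($!R$) from $!A\to B$ infer $!A\to!B$ and ($!C$) from $\Xi(\zeta,A;\Gamma_1,[A;\Gamma_2],\Gamma_3)\to B$ infer $\Xi(\zeta,A;\Gamma_1,[[\Gamma_2]],\Gamma_3)\to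 B$. $\mathcal{M}'^{\,\mathrm{mult}}_{2018}$ adds ($!R'$) from $A;\Lambda\to B$ infer $A;\Lambda\to!B$ and ($!C'$) from $\Xi(\zeta,A;\Gamma_1,[\zeta',A;\Gamma_2],\Gamma_3)\to B$ infer $\Xi(\zeta,A;\Gamma_1,[[\zeta';\Gamma_2]],\Gamma_3)\to B$. Cut is not a rule of these four. Stoup-free bracketed calculi $\mathcal{F}^{\mathrm{mult}}_{2015}$, $\mathcal{F}^{\mathrm{mult}}_{2018}$: meta-formulae are sequences of tree terms (all stoups empty); rules are the stoup-free versions of the common rules above (drop all stoups), except $!L$ is: from $\Xi(\Delta_1,A,\Delta_2)\to C$ infer $\Xi(\Delta_1,!A,\Delta_2)\to C$, together with ($!P_1$) from $\Xi(\Delta_1,!A,\Phi,\Delta_2)\to C$ infer $\Xi(\Delta_1,\Phi,!A,\Delta_2)\to C$, ($!P_2$) the converse, and (cut) from $\Pi\to A$ and $\Xi(\Gamma_1,A,\Gamma_2)\to C$ infer $\Xi(\Gamma_1,\Pi,\Gamma_2)\to C$ (no $!P$). $\mathcal{F}^{\mathrm{mult}}_{2015}$ adds ($!R$) from $!A_1,\dots,!A_n\to B$ infer $!A_1,\dots,!A_n\to!B$ ($n\ge1$) and ($!C$) from $\Xi(!A_1,\dots,!A_n,\Gamma_1,[!A_1,\dots,!A_n,\Gamma_2],\Gamma_3)\to C$ infer $\Xi(!A_1,\dots,!A_n,\Gamma_1,\Gamma_2,\Gamma_3)\to C$ ($n\ge1$); $\mathcal{F}^{\mathrm{mult}}_{2018}$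 adds ($!R$) from $!A\to B$ infer $!A\to!B$ and ($!C$) from $\Xi(!A,\Gamma_1,[!A,\Gamma_2],\Gamma_3)\to C$ infer $\Xi(!A,\Gamma_1,[[\Gamma_2]],\Gamma_3)\to C$. Grammars: an $\mathcal{L}$-grammar is a triple $\langle\Sigma,\rhd,H\rangle$ with $\Sigma$ a finite alphabet, $H$ a formula and $\rhd$ a finite relation between letters of $\Sigma$ and formulae. For a bracket-free calculus, $a_1\dots a_n$ is accepted if there are $A_i$ with $a_i\rhd A_i$ and $A_1,\dots,A_n\to H$ derivable; the grammar generates the set of accepted words. For bracketed calculi: s-recognition accepts $a_1\dots a_n$ if $A_1,\dots,A_n\to H$ (no brackets, empty stoups) is derivable for some $a_i\rhd A_i$; t-recognition accepts $a_1\dots a_n$ if $\Pi\to H$ is derivable for some meta-formula $\Pi$ with empty stoups which becomes $A_1,\dots,A_n$ after removing all brackets (but not bracket modalities), for some $a_i\rhd A_i$. The grammar generates $M$ in a given sense if the set of words accepted in that sense equals $M$. *)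

(* Defs.v *)
From Stdlib Require List.
From Stdlib Require Import Permutation.
From mathcomp Require Import all_boot.

Set Implicit Arguments.
Unset Strict Implicit.
Unset Printing Implicit Defensive.

Inductive formula : Type :=
| Var  : nat -> formula
| One  : formula
| Under : formula -> formula -> formula   (* Under A B = A \ B *)
| Over  : formula -> formula -> formula   (* Over B A  = B / A *)
| Prod  : formula -> formula -> formula
| Dia   : formula -> formula
| Binv  : formula -> formula
| Bang  : formula -> formula.

Fixpoint bracket_free (A : formula) : Prop :=
  match A with
  | Var _ | One => True
  | Under A B | Over A B | Prod A B => bracket_free A /\ bracket_free B
  | Dia _ | Binv _ => False
  | Bang A => bracket_free A
  end.

Inductive ecalc := Emult | Ermult.

(* Sequents are (antecedent list, succedent); the side conditions on axioms *)
(* and !W make every derivable sequent bracket-free.                        *)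
Inductive Eder : ecalc -> seq formula -> formula -> Prop :=
| E_ax c A : bracket_free A -> Eder c [:: A] A
| E_one c : Eder c [::] One
| E_underL c Pi A B D1 D2 C :
    Eder c Pi A -> Eder c (D1 ++ B :: D2) C ->
    Eder c (D1 ++ Pi ++ Under A B :: D2) C
| E_underR c Pi A B : Eder c (A :: Pi) B -> Eder c Pi (Under A B)
| E_overL c Pi A B D1 D2 C :
    Eder c Pi A -> Eder c (D1 ++ B :: D2) C ->
    Eder c (D1 ++ Over B A :: Pi ++ D2) C
| E_overR c Pi A B : Eder c (Pi ++ [:: A]) B -> Eder c Pi (Over B A)
| E_prodL c D1 A B D2 C :
    Eder c (D1 ++ A :: B :: D2) C -> Eder c (D1 ++ Prod A B :: D2) C
| E_prodR c G D A B : Eder c G A -> Eder c D B -> Eder c (G ++ D) (Prod A B)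
| E_oneL c D1 D2 C : Eder c (D1 ++ D2) C -> Eder c (D1 ++ One :: D2) C
| E_bangR c As B :
    Eder c (map Bang As) B -> Eder c (map Bang As) (Bang B)
| E_bangL c D1 A D2 C : Eder c (D1 ++ A :: D2) C -> Eder c (D1 ++ Bang A :: D2) C
| E_bangP1 c D1 A Phi D2 C :
    Eder c (D1 ++ Bang A :: Phi ++ D2) C -> Eder c (D1 ++ Phi ++ Bang A :: D2) C
| E_bangP2 c D1 A Phi D2 C :
    Eder c (D1 ++ Phi ++ Bang A :: D2) C -> Eder c (D1 ++ Bang A :: Phi ++ D2) C
| E_bangC c D1 A D2 C :
    Eder c (D1 ++ Bang A :: Bang A :: D2) C -> Eder c (D1 ++ Bang A :: D2) C
| E_bangW D1 A D2 C :
    bracket_free A ->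
    Eder Emult (D1 ++ D2) C -> Eder Emult (D1 ++ Bang A :: D2) C
| E_cut c Pi A D1 D2 C :
    Eder c Pi A -> Eder c (D1 ++ A :: D2) C -> Eder c (D1 ++ Pi ++ D2) C.

(* A stoup (finite multiset) is represented by a list, taken up to          *)
(* permutation (see mf_equiv and the rule M_stoup below).                   *)
Inductive tterm : Type :=
| TF : formula -> tterm
| TB : seq formula -> seq tterm -> tterm.       (* a bracket [zeta; Gamma] *)

Definition mf := (seq formula * seq tterm)%type.

Definition brk (X : mf) : tterm := TB X.1 X.2.

(* contexts Xi( _ ) : the hole is the whole meta-formula or the content of *)
(* a bracket at any depth                                                  *)
Inductive mctx : Type :=
| MHole : mctx
| MIn : seq formula -> seq tterm -> mctx -> seq tterm -> mctx.

Fixpoint mfill (K : mctx) (X : mf) : mf :=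
  match K with
  | MHole => X
  | MIn z G1 K' G2 => (z, G1 ++ brk (mfill K' X) :: G2)
  end.

(* equality of meta-formulae with stoups read as multisets (at all depths) *)
Inductive tt_equiv : tterm -> tterm -> Prop :=
| tte_F A : tt_equiv (TF A) (TF A)
| tte_B z z' G G' :
    Permutation z z' -> List.Forall2 tt_equiv G G' -> tt_equiv (TB z G) (TB z' G').

Definition mf_equiv (X Y : mf) : Prop :=
  Permutation X.1 Y.1 /\ List.Forall2 tt_equiv X.2 Y.2.

Inductive mcalc := M2015 | M2015' | M2018 | M2018'.

Inductive Mder : mcalc -> mf -> formula -> Prop :=
| M_stoup v X Y C : Mder v X C -> mf_equiv X Y -> Mder v Y C
| M_ax v A : Mder v ([::], [:: TF A]) A
| M_one v : Mder v ([::], [::]) One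
| M_overL v K z1 G B z2 D1 C D2 D :
    Mder v (z1, G) B -> Mder v (mfill K (z2, D1 ++ TF C :: D2)) D ->
    Mder v (mfill K (z1 ++ z2, D1 ++ TF (Over C B) :: G ++ D2)) D
| M_overR v z G B C : Mder v (z, G ++ [:: TF B]) C -> Mder v (z, G) (Over C B)
| M_underL v K z1 G A z2 D1 C D2 D :
    Mder v (z1, G) A -> Mder v (mfill K (z2, D1 ++ TF C :: D2)) D ->
    Mder v (mfill K (z1 ++ z2, D1 ++ G ++ TF (Under A C) :: D2)) D
| M_underR v z G A C : Mder v (z, TF A :: G) C -> Mder v (z, G) (Under A C)
| M_prodL v K z D1 A B D2 D :
    Mder v (mfill K (z, D1 ++ TF A :: TF B :: D2)) D ->
    Mder v (mfill K (z, D1 ++ TF (Prod A B) :: D2)) D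
| M_prodR v z1 D z2 G A B :
    Mder v (z1, D) A -> Mder v (z2, G) B -> Mder v (z1 ++ z2, D ++ G) (Prod A B)
| M_oneL v K z D1 D2 A :
    Mder v (mfill K (z, D1 ++ D2)) A -> Mder v (mfill K (z, D1 ++ TF One :: D2)) A
| M_binvL v K z D1 A D2 B :
    Mder v (mfill K (z, D1 ++ TF A :: D2)) B ->
    Mder v (mfill K (z, D1 ++ TB [::] [:: TF (Binv A)] :: D2)) B
| M_binvR v X A : Mder v ([::], [:: brk X]) A -> Mder v X (Binv A)
| M_diaL v K z D1 A D2 B :
    Mder v (mfill K (z, D1 ++ TB [::] [:: TF A] :: D2)) B ->
    Mder v (mfill K (z, D1 ++ TF (Dia A) :: D2)) B
| M_diaR v X A : Mder v X A -> Mder v ([::], [:: brk X]) (Dia A)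
| M_bangL v K z A G1 G2 B :
    Mder v (mfill K (z ++ [:: A], G1 ++ G2)) B ->
    Mder v (mfill K (z, G1 ++ TF (Bang A) :: G2)) B
| M_bangP v K z G1 A G2 B :
    Mder v (mfill K (z, G1 ++ TF A :: G2)) B ->
    Mder v (mfill K (z ++ [:: A], G1 ++ G2)) B
| M15_bangR z B : Mder M2015 (z, [::]) B -> Mder M2015 (z, [::]) (Bang B)
| M15_bangC K z1 z2 G1 G2 G3 B :
    z2 <> [::] ->
    Mder M2015 (mfill K (z1 ++ z2, G1 ++ TB z2 G2 :: G3)) B ->
    Mder M2015 (mfill K (z1 ++ z2, G1 ++ G2 ++ G3)) B
| M15'_bangR z B : z <> [::] -> Mder M2015' (z, [::]) B -> Mder M2015' (z, [::]) (Bang B)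
| M15'_bangC K z1 z2 z' G1 G2 G3 C :
    z2 <> [::] ->
    Mder M2015' (mfill K (z1 ++ z2, G1 ++ TB (z' ++ z2) G2 :: G3)) C ->
    Mder M2015' (mfill K (z1 ++ z2 ++ z', G1 ++ G2 ++ G3)) C
| M18_bangR A B :
    Mder M2018 ([::], [:: TF (Bang A)]) B -> Mder M2018 ([::], [:: TF (Bang A)]) (Bang B)
| M18_bangC K z A G1 G2 G3 B :
    Mder M2018 (mfill K (z ++ [:: A], G1 ++ TB [:: A] G2 :: G3)) B ->
    Mder M2018 (mfill K (z ++ [:: A], G1 ++ TB [::] [:: TB [::] G2] :: G3)) B
| M18'_bangR A B :
    Mder M2018' ([:: A], [::]) B -> Mder M2018' ([:: A], [::]) (Bang B)
| M18'_bangC K z A z' G1 G2 G3 B :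
    Mder M2018' (mfill K (z ++ [:: A], G1 ++ TB (z' ++ [:: A]) G2 :: G3)) B ->
    Mder M2018' (mfill K (z ++ [:: A], G1 ++ TB [::] [:: TB z' G2] :: G3)) B.

Inductive ftt : Type :=
| FF : formula -> ftt
| FB : seq ftt -> ftt.

Inductive fctx : Type :=
| FHole : fctx
| FIn : seq ftt -> fctx -> seq ftt -> fctx.

Fixpoint ffill (K : fctx) (X : seq ftt) : seq ftt :=
  match K with
  | FHole => X
  | FIn G1 K' G2 => G1 ++ FB (ffill K' X) :: G2
  end.

Definition fbangs (As : seq formula) : seq ftt := map (fun A => FF (Bang A)) As.

Inductive fcalc := F2015 | F2018.

Inductive Fder : fcalc -> seq ftt -> formula -> Prop :=
| F_ax v A : Fder v [:: FF A] A
| F_one v : Fder v [::] One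
| F_overL v K G B D1 C D2 D :
    Fder v G B -> Fder v (ffill K (D1 ++ FF C :: D2)) D ->
    Fder v (ffill K (D1 ++ FF (Over C B) :: G ++ D2)) D
| F_overR v G B C : Fder v (G ++ [:: FF B]) C -> Fder v G (Over C B)
| F_underL v K G A D1 C D2 D :
    Fder v G A -> Fder v (ffill K (D1 ++ FF C :: D2)) D ->
    Fder v (ffill K (D1 ++ G ++ FF (Under A C) :: D2)) D
| F_underR v G A C : Fder v (FF A :: G) C -> Fder v G (Under A C)
| F_prodL v K D1 A B D2 D :
    Fder v (ffill K (D1 ++ FF A :: FF B :: D2)) D ->
    Fder v (ffill K (D1 ++ FF (Prod A B) :: D2)) D
| F_prodR v D G A B : Fder v D A -> Fder v G B -> Fder v (D ++ G) (Prod A B)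
| F_oneL v K D1 D2 A :
    Fder v (ffill K (D1 ++ D2)) A -> Fder v (ffill K (D1 ++ FF One :: D2)) A
| F_binvL v K D1 A D2 B :
    Fder v (ffill K (D1 ++ FF A :: D2)) B ->
    Fder v (ffill K (D1 ++ FB [:: FF (Binv A)] :: D2)) B
| F_binvR v X A : Fder v [:: FB X] A -> Fder v X (Binv A)
| F_diaL v K D1 A D2 B :
    Fder v (ffill K (D1 ++ FB [:: FF A] :: D2)) B ->
    Fder v (ffill K (D1 ++ FF (Dia A) :: D2)) B
| F_diaR v X A : Fder v X A -> Fder v [:: FB X] (Dia A)
| F_bangL v K D1 A D2 C :
    Fder v (ffill K (D1 ++ FF A :: D2)) C ->
    Fder v (ffill K (D1 ++ FF (Bang A) :: D2)) C
| F_bangP1 v K D1 A Phi D2 C :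
    Fder v (ffill K (D1 ++ FF (Bang A) :: Phi ++ D2)) C ->
    Fder v (ffill K (D1 ++ Phi ++ FF (Bang A) :: D2)) C
| F_bangP2 v K D1 A Phi D2 C :
    Fder v (ffill K (D1 ++ Phi ++ FF (Bang A) :: D2)) C ->
    Fder v (ffill K (D1 ++ FF (Bang A) :: Phi ++ D2)) C
| F_cut v Pi A K G1 G2 C :
    Fder v Pi A -> Fder v (ffill K (G1 ++ FF A :: G2)) C ->
    Fder v (ffill K (G1 ++ Pi ++ G2)) C
| F15_bangR As B :
    As <> [::] -> Fder F2015 (fbangs As) B -> Fder F2015 (fbangs As) (Bang B)
| F15_bangC K As G1 G2 G3 C :
    As <> [::] ->
    Fder F2015 (ffill K (fbangs As ++ G1 ++ FB (fbangs As ++ G2) :: G3)) C ->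
    Fder F2015 (ffill K (fbangs As ++ G1 ++ G2 ++ G3)) C
| F18_bangR A B :
    Fder F2018 [:: FF (Bang A)] B -> Fder F2018 [:: FF (Bang A)] (Bang B)
| F18_bangC K A G1 G2 G3 C :
    Fder F2018 (ffill K (FF (Bang A) :: G1 ++ FB (FF (Bang A) :: G2) :: G3)) C ->
    Fder F2018 (ffill K (FF (Bang A) :: G1 ++ FB [:: FB G2] :: G3)) C.

(* L-grammar <Sigma, |>, H>; the finite relation |> is given by a finite list *)
Record grammar (Sigma : Type) := Grammar {
  lex : seq (Sigma * formula)%type;
  target : formula
}.

Definition assigns (Sigma : Type) (g : grammar Sigma) (w : seq Sigma)
  (As : seq formula) : Prop :=
  List.Forall2 (fun a A => List.In (a, A) (lex g)) w As.

Definition E_accepts (c : ecalc) (Sigma : Type) (g : grammar Sigma) (w : seq Sigma) :=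
  exists As, assigns g w As /\ Eder c As (target g).

Definition E_generates (c : ecalc) (Sigma : Type) (g : grammar Sigma)
  (M : seq Sigma -> Prop) := forall w, M w <-> E_accepts c g w.

Fixpoint tt_nostoup (t : tterm) : Prop :=
  match t with
  | TF _ => True
  | TB z G => z = [::] /\
      (fix go (l : seq tterm) : Prop :=
         match l with [::] => True | t' :: l' => tt_nostoup t' /\ go l' end) G
  end.

Definition mf_nostoup (X : mf) : Prop := X.1 = [::] /\ List.Forall tt_nostoup X.2.

Fixpoint tt_flat (t : tterm) : seq formula :=
  match t with
  | TF A => [:: A]
  | TB _ G => flatten (map tt_flat G)
  end.

Definition mf_flat (X : mf) : seq formula := flatten (map tt_flat X.2).

Definition M_s_accepts (v : mcalc) (Sigma : Type) (g : grammar Sigma) (w : seq Sigma) :=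
  exists As, assigns g w As /\ Mder v ([::], map TF As) (target g).

Definition M_t_accepts (v : mcalc) (Sigma : Type) (g : grammar Sigma) (w : seq Sigma) :=
  exists As (Pi : mf), assigns g w As /\ mf_nostoup Pi /\ mf_flat Pi = As /\
                       Mder v Pi (target g).

Definition M_s_generates (v : mcalc) (Sigma : Type) (g : grammar Sigma)
  (M : seq Sigma -> Prop) := forall w, M w <-> M_s_accepts v g w.

Definition M_t_generates (v : mcalc) (Sigma : Type) (g : grammar Sigma)
  (M : seq Sigma -> Prop) := forall w, M w <-> M_t_accepts v g w.

Fixpoint ftt_flat (t : ftt) : seq formula :=
  match t with
  | FF A => [:: A]
  | FB G => flatten (map ftt_flat G)
  end.

Definition F_s_accepts (v : fcalc) (Sigma : Type) (g : grammar Sigma) (w : seq Sigma) :=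
  exists As, assigns g w As /\ Fder v (map FF As) (target g).

Definition F_t_accepts (v : fcalc) (Sigma : Type) (g : grammar Sigma) (w : seq Sigma) :=
  exists As (Pi : seq ftt), assigns g w As /\ flatten (map ftt_flat Pi) = As /\
                            Fder v Pi (target g).

Definition F_s_generates (v : fcalc) (Sigma : Type) (g : grammar Sigma)
  (M : seq Sigma -> Prop) := forall w, M w <-> F_s_accepts v g w.

Definition F_t_generates (v : fcalc) (Sigma : Type) (g : grammar Sigma)
  (M : seq Sigma -> Prop) := forall w, M w <-> F_t_accepts v g w.

(* Recursively enumerable languages = languages of type-0 (unrestricted)    *)
(* Chomsky grammars.                                                        *)
Record t0grammar (Sigma : Type) := T0Grammar {
  nonterm : finType;
  t0rules : seq (seq (Sigma + nonterm)%type * seq (Sigma + nonterm)%type)%type;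
  t0start : nonterm;
  t0rules_lhs : forall r, List.In r t0rules ->
                  exists N, List.In (inr N) r.1
}.

Inductive t0step (Sigma : Type) (G : t0grammar Sigma) :
  seq (Sigma + nonterm G)%type -> seq (Sigma + nonterm G)%type -> Prop :=
| t0_step u v l r : List.In (l, r) (t0rules G) -> @t0step Sigma G (u ++ l ++ v) (u ++ r ++ v).

Inductive t0derives (Sigma : Type) (G : t0grammar Sigma) :
  seq (Sigma + nonterm G)%type -> seq (Sigma + nonterm G)%type -> Prop :=
| t0_refl x : @t0derives Sigma G x x
| t0_trans x y z : @t0step Sigma G x y -> @t0derives Sigma G y z -> @t0derives Sigma G x z.

Definition t0language (Sigma : Type) (G : t0grammar Sigma) (w : seq Sigma) : Prop :=
  @t0derives Sigma G [:: inr (t0start G)] (map inl w).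

Definition recursively_enumerable (Sigma : finType) (M : seq Sigma -> Prop) : Prop :=
  exists G : t0grammar Sigma, forall w, M w <-> t0language G w.

(* Main.v *)
Require Import Defs.
From Stdlib Require List.
From Stdlib Require Import Permutation.
From mathcomp Require Import all_boot.
Set Implicit Arguments.
Unset Strict Implicit.

Section Sem.
Variable Sigma : finType.
Variable G : t0grammar Sigma.
Definition sym : countType := (Sigma + nonterm G)%type.
Definition der (x y : seq sym) := @t0derives Sigma G x y.

Lemma der_refl x : der x x. Proof. exact: t0_refl. Qed.
Lemma der_trans x y z : der x y -> der y z -> der x z.
Proof. rewrite /der. elim=> [//|a b c H _ IH] Hz. apply: t0_trans H (IH Hz). Qed.
Lemma step_catl x y w : t0step (G:=G) x y -> t0step (G:=G) (w ++ x) (w ++ y).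
Proof. case=> u v l r Hin. have := t0_step (w ++ u) v Hin. by rewrite -!catA. Qed.
Lemma step_catr x y w : t0step (G:=G) x y -> t0step (G:=G) (x ++ w) (y ++ w).
Proof. case=> u v l r Hin. have := t0_step u (v ++ w) Hin. by rewrite -!catA. Qed.
Lemma der_catl w x y : der x y -> der (w ++ x) (w ++ y).
Proof. rewrite /der. elim=> [a|a b c H _ IH]; first exact: t0_refl. exact: t0_trans (step_catl w H) IH. Qed.
Lemma der_catr w x y : der x y -> der (x ++ w) (y ++ w).
Proof. rewrite /der. elim=> [a|a b c H _ IH]; first exact: t0_refl. exact: t0_trans (step_catr w H) IH. Qed.
Lemma der_cat x x' y y' : der x x' -> der y y' -> der (x ++ y) (x' ++ y').
Proof. move=> H1 H2. apply: der_trans (der_catr _ H1) (der_catl _ H2). Qed.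
Lemma der_nil u : der [::] u -> u = [::].
Proof.
  suff: forall x, der x u -> x = [::] -> u = [::] by move=> H /H; apply.
  rewrite /der => x. elim=> // a b c H _ IH Ha. exfalso.
  case: H Ha => u0 v l r Hin. have [N HN] := t0rules_lhs Hin.
  move: HN => /=; case: l Hin => [//|s l] _ _ /(f_equal size). rewrite !size_cat /= addnS //.
Qed.

Fixpoint sem (A : formula) : seq sym -> Prop :=
  match A with
  | Var k => fun u => match @unpickle sym k with Some x => der [:: x] u | None => False end
  | One => fun u => u = [::]
  | Under A B => fun u => forall a, sem A a -> sem B (a ++ u)
  | Over B A => fun u => forall a, sem A a -> sem B (u ++ a)
  | Prod A B => fun u => exists a b, sem A a /\ sem B b /\ der (a ++ b) u
  | Dia A => sem A
  | Binv A => sem A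
  | Bang A => fun u => u = [::] /\ sem A [::]
  end.

Lemma sem_down A u u' : sem A u -> der u u' -> sem A u'.
Proof.
  elim: A u u' => [k||A _ B IH|B IH A _|A _ B _|A IH|A IH|A _] u u' /=.
  - case: (unpickle k) => // x H1 H2. exact: der_trans H1 H2.
  - move=> -> /der_nil //.
  - move=> H Hd a Ha. apply: IH (H a Ha) _. exact: der_catl.
  - move=> H Hd a Ha. apply: IH (H a Ha) _. exact: der_catr.
  - move=> [a [b [Ha [Hb Hd]]]] Hd'. exists a, b. split=>//. split=>//. exact: der_trans Hd Hd'.
  - exact: IH.
  - exact: IH.
  - move=> [-> H] /der_nil -> //.
Qed.

Fixpoint csem (Gm : seq formula) (u : seq sym) : Prop :=
  match Gm with
  | [::] => u = [::]
  | A :: G' => exists a b, sem A a /\ csem G' b /\ u = a ++ b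
  end.

Lemma csem_cat G1 G2 u : csem (G1 ++ G2) u <-> exists u1 u2, u = u1 ++ u2 /\ csem G1 u1 /\ csem G2 u2.
Proof.
  elim: G1 u => [|A G1 IH] u /=.
  - split; first by move=> H; exists [::], u. by move=> [u1 [u2 [-> [-> H]]]].
  - split.
    + move=> [a [b [Ha [/IH [u1 [u2 [-> [H1 H2]]]] ->]]]]. exists (a ++ u1), u2.
      rewrite catA; split=>//; split=>//. by exists a, u1.
    + move=> [u1 [u2 [-> [[a [b [Ha [Hb ->]]]] H2]]]]. exists a, (b ++ u2).
      rewrite catA; split=>//; split=>//. apply/IH. by exists b, u2.
Qed.

Lemma csem1 A u : csem [:: A] u <-> sem A u.
Proof. split=> /=. by move=> [a [b [H [-> ->]]]]; rewrite cats0. by move=> H; exists u, [::]; rewrite cats0. Qed.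

Lemma csem_mid D1 A D2 u : csem (D1 ++ A :: D2) u <->
  exists u1 a u2, u = u1 ++ a ++ u2 /\ csem D1 u1 /\ sem A a /\ csem D2 u2.
Proof.
  rewrite csem_cat. split.
  - move=> [u1 [u' [-> [H1 [a [u2 [Ha [H2 ->]]]]]]]]. by exists u1, a, u2.
  - move=> [u1 [a [u2 [-> [H1 [Ha H2]]]]]]. exists u1, (a ++ u2). split=>//. split=>//. by exists a, u2.
Qed.

Lemma csem_replace D1 A B D2 u : (forall a, sem A a -> sem B a) ->
  csem (D1 ++ A :: D2) u -> csem (D1 ++ B :: D2) u.
Proof. move=> H /csem_mid [u1 [a [u2 [-> [H1 [Ha H2]]]]]]. apply/csem_mid. exists u1, a, u2. auto. Qed.

Lemma csem_bangs As u : csem (map Bang As) u -> u = [::] /\ forall A, List.In A As -> sem A [::].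
Proof.
  elim: As u => [|A As IH] u /=; first by move=> ->.
  move=> [a [b [[-> Ha] [/IH [-> H] ->]]]]. split=>//. move=> B [<-|]; auto.
Qed.

Lemma E_sound c Gm C : Eder c Gm C -> forall u, csem Gm u -> sem C u.
Proof.
  elim=> {c Gm C}.
  - move=> c A _ u /csem1 //.
  - by move=> c u /= ->.
  - move=> c Pi A B D1 D2 C _ IH1 _ IH2 u.
    rewrite catA => /csem_mid [u1 [f [u2 [-> [/csem_cat [d1 [p [-> [H1 Hp]]]] [Hf H2]]]]]].
    have -> : (d1 ++ p) ++ f ++ u2 = d1 ++ (p ++ f) ++ u2 by rewrite !catA.
    apply: IH2.
    apply/csem_mid. exists d1, (p ++ f), u2. split=>//. split=>//. split=>//. exact: Hf _ (IH1 _ Hp).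
  - move=> c Pi A B _ IH u Hu a Ha. apply: IH => /=. by exists a, u.
  - move=> c Pi A B D1 D2 C _ IH1 _ IH2 u /csem_mid [d1 [f [u2 [-> [H1 [Hf /csem_cat [p [d2 [-> [Hp H2]]]]]]]]]].
    have -> : d1 ++ f ++ p ++ d2 = d1 ++ (f ++ p) ++ d2 by rewrite !catA.
    apply: IH2.
    apply/csem_mid. exists d1, (f ++ p), d2. split=>//. split=>//. split=>//. exact: Hf _ (IH1 _ Hp).
  - move=> c Pi A B _ IH u Hu a Ha. apply: IH. apply/csem_cat. exists u, a. split=>//. split=>//. exact/csem1.
  - move=> c D1 A B D2 C _ IH u /csem_mid [d1 [p [d2 [-> [H1 [[a [b [Ha [Hb Hd]]]] H2]]]]]].
    apply: (sem_down (u := d1 ++ (a ++ b) ++ d2)); last by apply: der_catl; apply: der_catr.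
    apply: IH. apply/csem_mid. exists d1, a, (b ++ d2). rewrite !catA. split=>//. split=>//. split=>//. by exists b, d2.
  - move=> c G1 D A B _ IH1 _ IH2 u /csem_cat [a [b [-> [Ha Hb]]]]. exists a, b. split; first exact: IH1.
    split; [exact: IH2|exact: der_refl].
  - move=> c D1 D2 C _ IH u /csem_mid [d1 [a [d2 [-> [H1 [/= -> H2]]]]]]. apply: IH. apply/csem_cat. by exists d1, d2.
  - move=> c As B _ IH u Hu. have [Hu0 _] := csem_bangs Hu. subst u. split=>//. exact: IH.
  - move=> c D1 A D2 C _ IH u /csem_mid [d1 [a [d2 [-> [H1 [[-> Ha] H2]]]]]]. apply: IH. apply/csem_mid. by exists d1, [::], d2.
  - move=> c D1 A Phi D2 C _ IH u. rewrite catA => /csem_mid [u1 [a [d2 [-> [/csem_cat [d1 [p [-> [H1 Hp]]]] [[-> Ha] H2]]]]]].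
    have -> : (d1 ++ p) ++ [::] ++ d2 = d1 ++ [::] ++ (p ++ d2) by rewrite /= catA.
    apply: IH. apply/csem_mid. exists d1, [::], (p ++ d2). split=>//. split=>//. split=>//.
    apply/csem_cat. by exists p, d2.
  - move=> c D1 A Phi D2 C _ IH u /csem_mid [d1 [a [u2 [-> [H1 [[-> Ha] /csem_cat [p [d2 [-> [Hp H2]]]]]]]]]].
    have -> : d1 ++ [::] ++ p ++ d2 = (d1 ++ p) ++ [::] ++ d2 by rewrite /= catA.
    apply: IH. rewrite catA. apply/csem_mid. exists (d1 ++ p), [::], d2.
    split=>//. split; last by []. apply/csem_cat. by exists d1, p.
  - move=> c D1 A D2 C _ IH u /csem_mid [d1 [a [d2 [-> [H1 [[-> Ha] H2]]]]]]. apply: IH. apply/csem_mid.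
    exists d1, [::], d2. split=>//. split=>//. split=>//. by exists [::], d2.
  - move=> D1 A D2 C _ _ IH u /csem_mid [d1 [a [d2 [-> [H1 [[-> Ha] H2]]]]]]. apply: IH. apply/csem_cat. by exists d1, d2.
  - move=> c Pi A D1 D2 C _ IH1 _ IH2 u /csem_cat [d1 [u' [-> [H1 /csem_cat [p [d2 [-> [Hp H2]]]]]]]].
    have := IH2 (d1 ++ p ++ d2). apply. apply/csem_mid. exists d1, p, d2. split=>//. split=>//. split=>//. exact: IH1.
Qed.
End Sem.

Fixpoint st_t (t : tterm) : seq formula :=
  match t with TF _ => [::] | TB z G => z ++ flatten (map st_t G) end.
Definition stl (G : seq tterm) := flatten (map st_t G).
Definition fl (G : seq tterm) := flatten (map tt_flat G).

Lemma stl_cat G1 G2 : stl (G1 ++ G2) = stl G1 ++ stl G2.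
Proof. by rewrite /stl map_cat flatten_cat. Qed.
Lemma fl_cat G1 G2 : fl (G1 ++ G2) = fl G1 ++ fl G2.
Proof. by rewrite /fl map_cat flatten_cat. Qed.

Fixpoint tterm_ind' (P : tterm -> Prop) (HF : forall A, P (TF A))
  (HB : forall z G, List.Forall P G -> P (TB z G)) (t : tterm) : P t :=
  match t with
  | TF A => HF A
  | TB z G => HB z G ((fix go (l : seq tterm) : List.Forall P l :=
       match l with [::] => List.Forall_nil _ | t' :: l' => List.Forall_cons _ (tterm_ind' HF HB t') (go l') end) G)
  end.

Lemma tt_equiv_props t t' : tt_equiv t t' ->
  tt_flat t = tt_flat t' /\ (forall A, List.In A (st_t t) -> List.In A (st_t t')).
Proof.
  elim/tterm_ind': t t' => [A|z G HG] t' H.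
    inversion H; subst; by split.
  inversion H as [|z0 z' G0 G' Hp Hf]; subst.
  have: fl G = fl G' /\ (forall A, List.In A (stl G) -> List.In A (stl G')).
    elim: HG G' Hf {H} => [|t G0 Ht _ IH] G1 H2.
      inversion H2; subst; by split.
    inversion H2 as [|x y l l' Hxy Hll]; subst.
    have [E1 E2] := Ht _ Hxy. have [E3 E4] := IH _ Hll. rewrite /fl /stl /= in E3 E4 *. rewrite E1 E3. split=>// A.
    rewrite !List.in_app_iff. intuition.
  move=> [E1 E2]. split; first exact: E1.
  move=> A /=. rewrite !List.in_app_iff => [[HA|HA]]. left. exact: Permutation_in Hp HA.
  right. exact: E2.
Qed.

Lemma Forall2_tt_props G G' : List.Forall2 tt_equiv G G' ->
  fl G = fl G' /\ (forall A, List.In A (stl G) -> List.In A (stl G')).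
Proof.
  elim=> [|t t' G0 G1 Ht _ [E3 E4]]; first by split.
  have [E1 E2] := tt_equiv_props Ht. rewrite /fl /stl /= in E3 E4 *. rewrite E1 E3. split=>// A.
  rewrite !List.in_app_iff. intuition.
Qed.

Lemma tt_equiv_refl t : tt_equiv t t.
Proof.
  elim/tterm_ind': t => [A|z G HG]; first exact: tte_F.
  apply: tte_B; first exact: Permutation_refl. elim: HG => //= t G0 Ht _ IH. by constructor.
Qed.
Lemma Forall2_refl G : List.Forall2 tt_equiv G G.
Proof. elim: G => //= t G IH. constructor=>//. exact: tt_equiv_refl. Qed.

Section MSem.
Variable Sigma : finType.
Variable G : t0grammar Sigma.
Local Notation sem := (@sem Sigma G).
Local Notation csem := (@csem Sigma G).

Definition ok (L : seq formula) := forall A, List.In A L -> sem A [::].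
Definition tsem (Gm : seq tterm) u := ok (stl Gm) /\ csem (fl Gm) u.
Definition msem (X : mf) u := ok X.1 /\ tsem X.2 u.

Lemma ok_cat a b : ok (a ++ b) <-> ok a /\ ok b.
Proof.
  rewrite /ok. split.
  - move=> H; split=> A HA; apply: H; rewrite List.in_app_iff; auto.
  - move=> [H1 H2] A; rewrite List.in_app_iff => [[]]; auto.
Qed.
Lemma ok_nil : ok [::]. Proof. by move=> A []. Qed.
Hint Resolve ok_nil : core.
Lemma ok1 A : ok [:: A] <-> sem A [::].
Proof. split. move=> H; apply: H; by left. by move=> H B [<-|]. Qed.

Lemma tsem_nil u : tsem [::] u <-> u = [::].
Proof. rewrite /tsem /=. split. by case. by move=> ->; split. Qed.

Lemma tsem_cat G1 G2 u : tsem (G1 ++ G2) u <-> exists u1 u2, u = u1 ++ u2 /\ tsem G1 u1 /\ tsem G2 u2.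
Proof.
  rewrite /tsem stl_cat fl_cat ok_cat csem_cat. split.
  - move=> [[O1 O2] [u1 [u2 [-> [H1 H2]]]]]. by exists u1, u2.
  - move=> [u1 [u2 [-> [[O1 H1] [O2 H2]]]]]. split=>//. by exists u1, u2.
Qed.

Lemma tsem_F A Gm u : tsem (TF A :: Gm) u <-> exists a b, sem A a /\ tsem Gm b /\ u = a ++ b.
Proof.
  rewrite /tsem /stl /fl /=. split.
  - move=> [O [a [b [Ha [Hb ->]]]]]. by exists a, b.
  - move=> [a [b [Ha [[O Hb] ->]]]]. split=>//. by exists a, b.
Qed.

Lemma tsem_B z G' Gm u : tsem (TB z G' :: Gm) u <->
  exists a b, msem (z, G') a /\ tsem Gm b /\ u = a ++ b.
Proof.
  rewrite /tsem /msem. have -> : stl (TB z G' :: Gm) = (z ++ stl G') ++ stl Gm by [].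
  have -> : fl (TB z G' :: Gm) = fl G' ++ fl Gm by []. rewrite !ok_cat csem_cat /=. split.
  - move=> [[[O1 O2] O3] [a [b [-> [H1 H3]]]]]. exists a, b. by do !split.
  - move=> [a [b [[O1 [O2 H1]] [[O3 H3] ->]]]]. split=>//. by exists a, b.
Qed.

Lemma tsem1F A u : tsem [:: TF A] u <-> sem A u.
Proof. rewrite tsem_F. split. move=> [a [b [Ha [/tsem_nil -> ->]]]]; by rewrite cats0.
  move=> H; exists u, [::]; rewrite cats0; split=>//; split=>//; exact/tsem_nil. Qed.

Lemma tsem_mapTF As u : tsem (map TF As) u <-> csem As u.
Proof.
  elim: As u => [|A As IH] u /=; first exact: tsem_nil.
  rewrite tsem_F. split.
  - move=> [a [b [Ha [/IH Hb ->]]]]. by exists a, b.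
  - move=> [a [b [Ha [/IH Hb ->]]]]. by exists a, b.
Qed.

Lemma tsem_midF D1 A D2 u : tsem (D1 ++ TF A :: D2) u <->
  exists u1 a u2, u = u1 ++ a ++ u2 /\ tsem D1 u1 /\ sem A a /\ tsem D2 u2.
Proof.
  rewrite tsem_cat. split.
  - move=> [u1 [u' [-> [H1 /tsem_F [a [u2 [Ha [H2 ->]]]]]]]]. by exists u1, a, u2.
  - move=> [u1 [a [u2 [-> [H1 [Ha H2]]]]]]. exists u1, (a ++ u2). split=>//. split=>//. apply/tsem_F. by exists a, u2.
Qed.

Lemma tsem_midB D1 z G' D2 u : tsem (D1 ++ TB z G' :: D2) u <->
  exists u1 a u2, u = u1 ++ a ++ u2 /\ tsem D1 u1 /\ msem (z, G') a /\ tsem D2 u2.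
Proof.
  rewrite tsem_cat. split.
  - move=> [u1 [u' [-> [H1 /tsem_B [a [u2 [Ha [H2 ->]]]]]]]]. by exists u1, a, u2.
  - move=> [u1 [a [u2 [-> [H1 [Ha H2]]]]]]. exists u1, (a ++ u2). split=>//. split=>//. apply/tsem_B. by exists a, u2.
Qed.

Lemma mfill_mono K X Y : (forall u, msem X u -> msem Y u) ->
  forall u, msem (mfill K X) u -> msem (mfill K Y) u.
Proof.
  move=> HXY. elim: K => [|z G1 K IH G2] u /=; first exact: HXY.
  rewrite /msem /= => [[O]] /tsem_midB [u1 [a [u2 [-> [H1 [Ha H2]]]]]]. split=>//.
  apply/tsem_midB. exists u1, a, u2. split=>//. split=>//. split=>//. exact: IH.
Qed.

Lemma tsem_unbr G1 z G2 G3 u : tsem (G1 ++ TB z G2 :: G3) u <-> ok z /\ tsem (G1 ++ G2 ++ G3) u.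
Proof.
  rewrite /tsem !stl_cat !fl_cat.
  have -> : stl (TB z G2 :: G3) = (z ++ stl G2) ++ stl G3 by [].
  have -> : fl (TB z G2 :: G3) = fl G2 ++ fl G3 by [].
  rewrite !ok_cat. split; [move=> [[O1 [[O2 O3] O4]] H]|move=> [O2 [[O1 [O3 O4]] H]]]; by do !split.
Qed.

Lemma msem_br X u : msem ([::], [:: brk X]) u <-> msem X u.
Proof.
  have E : [:: brk X] = [::] ++ TB X.1 X.2 :: [::] by [].
  rewrite /msem E tsem_unbr cats0 /=. split; [by move=> [_ [? ?]]|move=> [? ?]]. split=>//.
Qed.

Lemma mfill_mono' K X Y : (forall u, msem X u -> exists u', msem Y u' /\ der u' u) ->
  forall u, msem (mfill K X) u -> exists u', msem (mfill K Y) u' /\ der u' u.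
Proof.
  move=> HXY. elim: K => [|z G1 K IH G2] u /=; first exact: HXY.
  rewrite /msem /= => [[O]] /tsem_midB [u1 [a [u2 [-> [H1 [Ha H2]]]]]].
  have [a' [Ha' Hd]] := IH _ Ha. exists (u1 ++ a' ++ u2). split.
    split=>//. apply/tsem_midB. exists u1, a', u2. split=>//.
  apply: der_catl. exact: der_catr.
Qed.

Lemma M_sound v X C : Mder v X C -> forall u, msem X u -> sem C u.
Proof.
  elim=> {v X C}.
  - move=> v X Y C _ IH [E1 E2] u [O1 [O2 H]]. apply: IH.
    have [F1 F2] := Forall2_tt_props E2. split.
      move=> A HA; apply: O1; exact: Permutation_in E1 HA.
    split. move=> A HA; apply: O2; exact: F2. move: H; rewrite /fl in F1 *; by rewrite F1.
  - move=> v A u [_ /tsem1F] //.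
  - by move=> v u [_ /tsem_nil].
  - move=> v K z1 G0 B z2 D1 C D2 D _ IH1 _ IH2 u Hu. apply: IH2. apply: mfill_mono Hu => {}u.
    rewrite /msem /= ok_cat => [[[O1 O2]]] /tsem_midF [d1 [f [u' [-> [H1 [Hf /tsem_cat [g [d2 [-> [Hg H2]]]]]]]]]].
    split=>//. apply/tsem_midF. exists d1, (f ++ g), d2. rewrite !catA. split=>//. split=>//. split=>//.
    apply: Hf. apply: IH1. by split.
  - move=> v z G0 B C _ IH u [O Hu] a Ha. apply: IH. split=>//. apply/tsem_cat. exists u, a. split=>//.
    split=>//. exact/tsem1F.
  - move=> v K z1 G0 A z2 D1 C D2 D _ IH1 _ IH2 u Hu. apply: IH2. apply: mfill_mono Hu => {}u.
    rewrite /msem /= ok_cat => [[[O1 O2]]]. rewrite catA.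
    move=> /tsem_midF [u1 [f [d2 [-> [/tsem_cat [d1 [g [-> [H1 Hg]]]] [Hf H2]]]]]].
    split=>//. apply/tsem_midF. exists d1, (g ++ f), d2. rewrite !catA. split=>//. split=>//. split=>//.
    apply: Hf. apply: IH1. by split.
  - move=> v z G0 A C _ IH u [O Hu] a Ha. apply: IH. split=>//. apply/tsem_F. by exists a, u.
  - move=> v K z D1 A B D2 D _ IH u Hu.
    have inner : forall u, msem (z, D1 ++ TF (Prod A B) :: D2) u ->
        exists u', msem (z, D1 ++ TF A :: TF B :: D2) u' /\ der u' u.
      move=> u0 [O /tsem_midF [d1 [p [d2 [-> [H1 [[a [b [Ha [Hb Hd]]]] H2]]]]]]].
      exists (d1 ++ (a ++ b) ++ d2). split; last by apply: der_catl; apply: der_catr.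
      split=>//. apply/tsem_midF. exists d1, a, (b ++ d2). rewrite !catA. split=>//. split=>//. split=>//.
      apply/tsem_F. by exists b, d2.
    have [u' [Hu' Hd]] := mfill_mono' inner Hu. exact: sem_down (IH _ Hu') Hd.
  - move=> v z1 D z2 G0 A B _ IH1 _ IH2 u [/ok_cat [O1 O2] /tsem_cat [a [b [-> [Ha Hb]]]]].
    exists a, b. split; first by apply: IH1. split; first by apply: IH2. exact: der_refl.
  - move=> v K z D1 D2 A _ IH u Hu. apply: IH. apply: mfill_mono Hu => {}u.
    move=> [O /tsem_midF [d1 [a [d2 [-> [H1 [/= -> H2]]]]]]]. split=>//. apply/tsem_cat. by exists d1, d2.
  - move=> v K z D1 A D2 B _ IH u Hu. apply: IH. apply: mfill_mono Hu => {}u.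
    move=> [O /tsem_midB [d1 [a [d2 [-> [H1 [[_ /tsem1F Ha] H2]]]]]]]. split=>//. apply/tsem_midF. by exists d1, a, d2.
  - move=> v X A _ IH u Hu. apply: IH. exact/msem_br.
  - move=> v K z D1 A D2 B _ IH u Hu. apply: IH. apply: mfill_mono Hu => {}u.
    move=> [O /tsem_midF [d1 [a [d2 [-> [H1 [Ha H2]]]]]]]. split=>//. apply/tsem_midB. exists d1, a, d2.
    split=>//. split=>//. split; last by []. split; first exact: ok_nil. exact/tsem1F.
  - move=> v X A _ IH u /msem_br Hu. exact: IH.
  - move=> v K z A G1 G2 B _ IH u Hu. apply: IH. apply: mfill_mono Hu => {}u.
    move=> [O /tsem_midF [d1 [a [d2 [-> [H1 [[-> Ha] H2]]]]]]]. split. apply/ok_cat; split=>//; exact/ok1.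
    apply/tsem_cat. by exists d1, d2.
  - move=> v K z G1 A G2 B _ IH u Hu. apply: IH. apply: mfill_mono Hu => {}u.
    move=> [/ok_cat [O /ok1 Ha] /tsem_cat [d1 [d2 [-> [H1 H2]]]]]. split=>//. apply/tsem_midF.
    by exists d1, [::], d2.
  - move=> z B _ IH u [O [_ Hu]]; rewrite /= in Hu; subst u. split=>//. apply: IH. by split.
  - move=> K z1 z2 G1 G2 G3 B _ _ IH u Hu. apply: IH. apply: mfill_mono Hu => {}u.
    move=> [O H]. split=>//. apply/tsem_unbr. split=>//. by move: O => /ok_cat [].
  - move=> z B _ _ IH u [O [_ Hu]]; rewrite /= in Hu; subst u. split=>//. apply: IH. by split.
  - move=> K z1 z2 z' G1 G2 G3 C _ _ IH u Hu. apply: IH. apply: mfill_mono Hu => {}u.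
    move=> [/ok_cat [O1 /ok_cat [O2 O3]] H]. split; first by apply/ok_cat.
    apply/tsem_unbr. split=>//. by apply/ok_cat.
  - move=> A B _ IH u [_ Hu]; move: Hu => /tsem1F [-> Ha]. split=>//. apply: IH. split=>//. exact/tsem1F.
  - move=> K z A G1 G2 G3 B _ IH u Hu. apply: IH. apply: mfill_mono Hu => {}u.
    move=> [O /tsem_unbr [_ H]]. rewrite /= in H. move: H => /tsem_unbr [_ H].
    split=>//. apply/tsem_unbr. split=>//. by move: O => /ok_cat [].
  - move=> A B _ IH u [O [_ Hu]]; rewrite /= in Hu; subst u. split=>//. apply: IH. by split.
  - move=> K z A z' G1 G2 G3 B _ IH u Hu. apply: IH. apply: mfill_mono Hu => {}u.
    move=> [O /tsem_unbr [_ H]]. rewrite /= in H. move: H => /tsem_unbr [O' H].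
    split=>//. apply/tsem_unbr. split=>//. apply/ok_cat. split=>//. by move: O => /ok_cat [].
Qed.
End MSem.

Definition ffl (X : seq ftt) := flatten (map ftt_flat X).
Lemma ffl_cat X Y : ffl (X ++ Y) = ffl X ++ ffl Y.
Proof. by rewrite /ffl map_cat flatten_cat. Qed.
Lemma ffl_F A X : ffl (FF A :: X) = A :: ffl X. Proof. by []. Qed.
Lemma ffl_B Y X : ffl (FB Y :: X) = ffl Y ++ ffl X. Proof. by []. Qed.
Lemma ffl_nil : ffl [::] = [::]. Proof. by []. Qed.
Lemma ffl_fbangs As : ffl (fbangs As) = map Bang As.
Proof. elim: As => //= A As IH. by rewrite -IH. Qed.

Section FSem.
Variable Sigma : finType.
Variable G : t0grammar Sigma.
Local Notation sem := (@sem Sigma G).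
Local Notation csem := (@csem Sigma G).
Definition fsem X u := csem (ffl X) u.

Lemma ffill_mono' K X Y : (forall u, fsem X u -> exists u', fsem Y u' /\ der u' u) ->
  forall u, fsem (ffill K X) u -> exists u', fsem (ffill K Y) u' /\ der u' u.
Proof.
  move=> HXY. elim: K => [|G1 K IH G2] u /=; first exact: HXY.
  rewrite /fsem !ffl_cat ffl_B => /csem_cat [u1 [u' [-> [H1 /csem_cat [a [u2 [-> [Ha H2]]]]]]]].
  have [a' [Ha' Hd]] := IH _ Ha. exists (u1 ++ a' ++ u2). split.
    apply/csem_cat. exists u1, (a' ++ u2). split=>//. split=>//. apply/csem_cat. by exists a', u2.
  apply: der_catl. exact: der_catr.
Qed.



Lemma fsem_down X u u' : fsem X u -> der u u' -> exists u0, fsem X u0 /\ der u0 u'.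
Proof. move=> H Hd. by exists u. Qed.

Lemma F_sound v X C : Fder v X C -> forall u, fsem X u -> sem C u.
Proof.
  have mono : forall K X Y D, (forall u, fsem (ffill K Y) u -> sem D u) -> (forall u, fsem X u -> fsem Y u) ->
      forall u, fsem (ffill K X) u -> sem D u.
    move=> K X0 Y D HY HXY u Hu. have [u' [Hu' Hd]] := @ffill_mono' K X0 Y
      (fun u0 H0 => ex_intro _ u0 (conj (HXY _ H0) (der_refl u0))) u Hu.
    exact: sem_down (HY _ Hu') Hd.
  rewrite /fsem in mono *.
  elim=> {v X C}.
  - move=> v A u /csem1 //.
  - by move=> v u /= ->.
  - move=> v K G0 B D1 C D2 D _ IH1 _ IH2. refine (mono _ _ _ _ IH2 _); move=> u.
    rewrite !ffl_cat ffl_F ffl_cat => /csem_mid [d1 [f [u' [-> [H1 [Hf /csem_cat [g [d2 [-> [Hg H2]]]]]]]]]].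
    rewrite ffl_F. apply/csem_mid. exists d1, (f ++ g), d2. rewrite !catA. do !split=>//.
    apply: Hf. exact: IH1.
  - move=> v G0 B C _ IH u Hu a Ha. apply: IH. rewrite ffl_cat. apply/csem_cat. exists u, a.
    do !split=>//. exact/csem1.
  - move=> v K G0 A D1 C D2 D _ IH1 _ IH2. refine (mono _ _ _ _ IH2 _); move=> u.
    rewrite !ffl_cat ffl_F catA => /csem_mid [u1 [f [d2 [-> [/csem_cat [d1 [g [-> [H1 Hg]]]] [Hf H2]]]]]].
    rewrite ffl_F. apply/csem_mid. exists d1, (g ++ f), d2. rewrite !catA. do !split=>//.
    apply: Hf. exact: IH1.
  - move=> v G0 A C _ IH u Hu a Ha. apply: IH. rewrite ffl_F. by exists a, u.
  - move=> v K D1 A B D2 D _ IH u Hu.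
    have inner : forall u, csem (ffl (D1 ++ FF (Prod A B) :: D2)) u ->
        exists u', csem (ffl (D1 ++ FF A :: FF B :: D2)) u' /\ der u' u.
      move=> u0. rewrite !ffl_cat !ffl_F => /csem_mid [d1 [p [d2 [-> [H1 [[a [b [Ha [Hb Hd]]]] H2]]]]]].
      exists (d1 ++ (a ++ b) ++ d2). split; last by apply: der_catl; apply: der_catr.
      apply/csem_mid. exists d1, a, (b ++ d2). rewrite !catA. do !split=>//. by exists b, d2.
    have [u' [Hu' Hd]] := ffill_mono' inner Hu. exact: sem_down (IH _ Hu') Hd.
  - move=> v D G0 A B _ IH1 _ IH2 u. rewrite ffl_cat => /csem_cat [a [b [-> [Ha Hb]]]].
    exists a, b. do !split. exact: IH1. exact: IH2. exact: der_refl.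
  - move=> v K D1 D2 A _ IH. refine (mono _ _ _ _ IH _); move=> u.
    rewrite !ffl_cat ffl_F => /csem_mid [d1 [a [d2 [-> [H1 [/= -> H2]]]]]]. apply/csem_cat. by exists d1, d2.
  - move=> v K D1 A D2 B _ IH. refine (mono _ _ _ _ IH _); move=> u.
    rewrite !ffl_cat ffl_B ffl_F => /csem_mid [d1 [a [d2 [-> [H1 [Ha H2]]]]]]. rewrite ffl_F.
    apply/csem_mid. by exists d1, a, d2.
  - move=> v X A _ IH u Hu. apply: IH. by rewrite ffl_B ffl_nil cats0.
  - move=> v K D1 A D2 B _ IH. refine (mono _ _ _ _ IH _); move=> u.
    rewrite !ffl_cat ffl_F => /csem_mid [d1 [a [d2 [-> [H1 [Ha H2]]]]]]. rewrite ffl_B ffl_F.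
    apply/csem_mid. by exists d1, a, d2.
  - move=> v X A _ IH u. rewrite ffl_B ffl_nil cats0. exact: IH.
  - move=> v K D1 A D2 C _ IH. refine (mono _ _ _ _ IH _); move=> u.
    rewrite !ffl_cat !ffl_F => /csem_mid [d1 [a [d2 [-> [H1 [[-> Ha] H2]]]]]].
    apply/csem_mid. by exists d1, [::], d2.
  - move=> v K D1 A Phi D2 C _ IH. refine (mono _ _ _ _ IH _); move=> u.
    rewrite !ffl_cat !ffl_F catA => /csem_mid [u1 [a [d2 [-> [/csem_cat [d1 [p [-> [H1 Hp]]]] [[-> Ha] H2]]]]]].
    have -> : (d1 ++ p) ++ [::] ++ d2 = d1 ++ [::] ++ (p ++ d2) by rewrite /= catA.
    rewrite ffl_cat. apply/csem_mid. exists d1, [::], (p ++ d2). do !split=>//. apply/csem_cat. by exists p, d2.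
  - move=> v K D1 A Phi D2 C _ IH. refine (mono _ _ _ _ IH _); move=> u.
    rewrite !(ffl_cat, ffl_F) => /csem_mid [d1 [a [u2 [-> [H1 [[-> Ha] /csem_cat [p [d2 [-> [Hp H2]]]]]]]]]].
    have -> : d1 ++ [::] ++ p ++ d2 = (d1 ++ p) ++ [::] ++ d2 by rewrite /= catA.
    rewrite catA. apply/csem_mid. exists (d1 ++ p), [::], d2. do !split=>//. apply/csem_cat. by exists d1, p.
  - move=> v Pi A K G1 G2 C _ IH1 _ IH2. refine (mono _ _ _ _ IH2 _); move=> u.
    rewrite !ffl_cat => /csem_cat [d1 [u' [-> [H1 /csem_cat [p [d2 [-> [Hp H2]]]]]]]].
    rewrite ffl_F. apply/csem_mid. exists d1, p, d2. do !split=>//. exact: IH1.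
  - move=> As B _ _ IH u Hu. have Hu' := Hu. rewrite ffl_fbangs in Hu'. have [Hu0 _] := csem_bangs Hu'.
    subst u. split=>//. exact: IH.
  - move=> K As G1 G2 G3 C _ _ IH. refine (mono _ _ _ _ IH _); move=> u.
    rewrite !(ffl_cat, ffl_B, ffl_fbangs) => /csem_cat [b [u' [-> [Hb H]]]].
    have [Hb0 HA] := csem_bangs Hb. subst b.
    have HB : csem (map Bang As) [::].
      clear -HA. elim: As HA => [|A As IHA] HA0 //=. exists [::], [::]. do !split=>//. apply: HA0. by left.
      apply: IHA => B HB. apply: HA0. by right.
    apply/csem_cat. exists [::], u'. do !split=>//.
    move: H => /csem_cat [g1 [u'' [-> [H1 /csem_cat [g2 [g3 [-> [H2 H3]]]]]]]].
    apply/csem_cat. exists g1, (g2 ++ g3). do !split=>//. apply/csem_cat. exists g2, g3. do !split=>//.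
    apply/csem_cat. by exists [::], g2.
  - move=> A B _ IH u. rewrite ffl_F ffl_nil => Hu. have [a [b [[Ha0 Ha] [Hb ->]]]] := Hu. rewrite /= in Hb.
    subst. split=>//. apply: IH. exists [::], [::]. done.
  - move=> K A G1 G2 G3 C _ IH. refine (mono _ _ _ _ IH _); move=> u.
    rewrite !(ffl_cat, ffl_F, ffl_B, ffl_nil, cats0). move=> [b [u' [[-> Ha] [H ->]]]].
    exists [::], u'. do !split=>//. move: H => /csem_cat [g1 [u'' [-> [H1 H]]]].
    apply/csem_cat. exists g1, u''. do !split=>//. move: H => /csem_cat [g2 [g3 [-> [H2 H3]]]].
    apply/csem_cat. exists g2, g3. do !split=>//. by exists [::], g2.
Qed.
End FSem.

Definition prodlist (l : seq formula) : formula := foldr Prod One l.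

Section Enc.
Variable Sigma : finType.
Variable G : t0grammar Sigma.
Local Notation sem := (@sem Sigma G).
Local Notation csem := (@csem Sigma G).
Local Notation sym := (@sym Sigma G).

Definition code (x : sym) : formula := Var (pickle x).
Definition codes (s : seq sym) := map code s.
Definition Lp (lr : seq sym * seq sym) := prodlist (codes lr.1).
Definition Rp (lr : seq sym * seq sym) := prodlist (codes lr.2).
Definition Real (lr : seq sym * seq sym) := Over (Lp lr) (Rp lr).
Definition Sf := code (inr (t0start G)).

Lemma sem_code x u : sem (code x) u <-> der [:: x] u.
Proof. by rewrite /= pickleK. Qed.

Lemma sem_codes s u : sem (prodlist (codes s)) u <-> der s u.
Proof.
  elim: s u => [|x s IH] u /=.
  - split; first by move=> ->; exact: der_refl. exact: der_nil.
  - split.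
    + move=> [a [b [Ha [/IH Hb Hd]]]]. rewrite pickleK in Ha. apply: der_trans Hd.
      exact: (der_cat Ha Hb).
    + move=> Hd. exists [:: x], s. rewrite pickleK. split; first exact: der_refl.
      split; [exact/IH/der_refl|exact: Hd].
Qed.

Lemma csem_codes s : csem (codes s) s.
Proof. elim: s => //= x s IH. exists [:: x], s. split=>//. rewrite pickleK. exact: der_refl. Qed.

Lemma sem_Real lr : List.In lr (t0rules G) -> sem (Real lr) [::].
Proof.
  case: lr => l r Hin /= a /sem_codes Ha. apply/sem_codes. apply: der_trans Ha.
  apply: t0_trans (t0_refl _). have := t0_step [::] [::] Hin. by rewrite /= !cats0.
Qed.

Lemma sem_prodlist_nil l : (forall A, List.In A l -> sem A [::]) -> sem (prodlist l) [::].
Proof.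
  elim: l => //= A l IH H. exists [::], [::]. split; first by apply: H; left.
  split; [apply: IH => B HB; apply: H; by right|exact: der_refl].
Qed.

Lemma sem_prodlist_empty l b : (forall A, List.In A l -> forall u, sem A u -> u = [::]) ->
  sem (prodlist l) b -> b = [::].
Proof.
  elim: l b => [|A l IH] b H /=; first by [].
  move=> [a [c [Ha [Hc Hd]]]]. have Ea := H A (or_introl erefl) _ Ha.
  have Ec := IH _ (fun B HB => H B (or_intror HB)) Hc. subst a c. exact: der_nil Hd.
Qed.

Definition tgt (Zs Ps : seq formula) := Over (Prod Sf (prodlist Zs)) (prodlist Ps).

Lemma target_sound Zs Ps w :
  (forall A, List.In A Ps -> sem A [::]) ->
  (forall A, List.In A Zs -> forall u, sem A u -> u = [::]) ->
  sem (tgt Zs Ps) (map inl w) -> t0language G w.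
Proof.
  move=> HP HZ H. have := H _ (sem_prodlist_nil HP). move=> [a [b [Ha [Hb Hd]]]].
  have Eb := sem_prodlist_empty HZ Hb. subst b. rewrite cats0 cats0 in Hd. have {}Ha := proj1 (sem_code _ _) Ha.
  exact: der_trans Ha Hd.
Qed.

Definition ERs := map (fun lr => Bang (Real lr)) (t0rules G).
Definition Etarget := tgt ERs ERs.

Lemma bf_codes s A : List.In A (codes s) -> bracket_free A.
Proof. rewrite /codes => /List.in_map_iff [x [<- _]] //. Qed.
Lemma bf_prodcodes s : bracket_free (prodlist (codes s)).
Proof. by elim: s => [|x s IH] //=. Qed.
Lemma bf_Real lr : bracket_free (Real lr).
Proof. split; exact: bf_prodcodes. Qed.
Lemma bf_ERs A : List.In A ERs -> bracket_free A.
Proof. rewrite /ERs => /List.in_map_iff [x [<- _]]. exact: bf_Real. Qed.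

Lemma E_prodR_list c l : (forall A, List.In A l -> bracket_free A) -> Eder c l (prodlist l).
Proof.
  elim: l => [|A l IH] H /=; first exact: E_one.
  apply: (@E_prodR c [:: A] l). apply: E_ax; apply: H; by left. apply: IH => B HB; apply: H; by right.
Qed.

Lemma E_prodL_list c D1 l D2 C : Eder c (D1 ++ l ++ D2) C -> Eder c (D1 ++ prodlist l :: D2) C.
Proof.
  elim: l D1 => [|A l IH] D1 /= H; first exact: E_oneL.
  apply: E_prodL. have := IH (D1 ++ [:: A]). rewrite -!catA /=. by apply.
Qed.

Lemma E_step c x y : t0step (G:=G) x y ->
  Eder c (codes x ++ ERs) (Prod Sf (prodlist ERs)) -> Eder c (codes y ++ ERs) (Prod Sf (prodlist ERs)).
Proof.
  case=> u v l r Hin. set Gl := Prod Sf (prodlist ERs). rewrite /codes !map_cat -!catA => H.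
  have HB : List.In (Bang (Real (l, r))) ERs by apply/List.in_map_iff; exists (l, r).
  have [Bs1 [Bs2 EB]] := List.in_split _ _ HB.
  have H1 := E_prodL_list (D1 := codes u) (l := codes l) (D2 := codes v ++ ERs) H.
  have HPi : Eder c (Bang (Real (l, r)) :: codes r) (Lp (l, r)).
    apply: (@E_bangL c [::]). have := @E_overL c (codes r) (Rp (l, r)) (Lp (l, r)) [::] [::] (Lp (l, r)).
    rewrite /= cats0. apply. exact: E_prodR_list (@bf_codes r). apply: E_ax. exact: bf_prodcodes.
  have H2 := E_cut HPi H1. rewrite EB in H2 *.
  have H4 : Eder c (codes u ++ (codes r ++ codes v ++ Bs1) ++ Bang (Real (l, r)) :: Bang (Real (l, r)) :: Bs2) Gl.
    apply: E_bangP1. move: H2. by rewrite /= -!catA.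
  have := @E_bangC c (codes u ++ codes r ++ codes v ++ Bs1) (Real (l, r)) Bs2 Gl. rewrite -!catA. apply.
  move: H4. by rewrite -!catA.
Qed.

Lemma E_complete c w : t0language G w -> Eder c (codes (map inl w)) Etarget.
Proof.
  move=> Hw. apply: E_overR. apply: (@E_prodL_list c (codes (map inl w)) ERs [::]). rewrite cats0.
  suff: forall x y, t0derives (G:=G) x y -> Eder c (codes x ++ ERs) (Prod Sf (prodlist ERs)) ->
    Eder c (codes y ++ ERs) (Prod Sf (prodlist ERs)).
    move=> /(_ _ _ Hw); apply. apply: (@E_prodR c [:: Sf] ERs). by apply: E_ax.
    exact: E_prodR_list bf_ERs.
  move=> x y. elim=> // a b d Hs _ IH Ha. apply: IH. exact: E_step Hs Ha.
Qed.
End Enc.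

Definition Tk := Dia (Dia One).

Section MEnc.
Variable Sigma : finType.
Variable G : t0grammar Sigma.
Local Notation sem := (@sem Sigma G).
Local Notation sym := (@sym Sigma G).
Local Notation Real := (@Real Sigma G).
Local Notation codes := (@codes Sigma G).

Definition Vx (fam : bool) lr := Prod (if fam then Bang Tk else One) (Bang (Real lr)).
Definition Ai fam lr := Binv (Vx fam lr).
Definition AZ fam := map (Ai fam) (t0rules G).
Definition Zs fam := AZ fam ++ [:: Tk].
Definition Mtarget fam := tgt G (Zs fam) (map Bang (Zs fam)).
Definition Gl fam := Prod (Sf G) (prodlist (Zs fam)).

Lemma Zs_sem fam A : List.In A (Zs fam) -> sem A [::].
Proof.
  rewrite /Zs List.in_app_iff => [[/List.in_map_iff [lr [<- Hin]]|[<-|//]]] //=.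
  exists [::], [::]. do !split=>//; last exact: der_refl. by case: fam. exact: sem_Real.
Qed.
Lemma Zs_empty fam A : List.In A (Zs fam) -> forall u, sem A u -> u = [::].
Proof.
  rewrite /Zs List.in_app_iff => [[/List.in_map_iff [lr [<- Hin]]|[<-|//]]] u //=.
  move=> [a [b [Ha [[-> _] Hd]]]]. have Ea : a = [::] by case: fam Ha => [[]|]. subst a. exact: der_nil Hd.
Qed.
Lemma PZs_sem fam A : List.In A (map Bang (Zs fam)) -> sem A [::].
Proof. move=> /List.in_map_iff [B [<- HB]] /=. split=>//. exact: Zs_sem HB. Qed.

Variable v : mcalc.

Lemma M_perm z z' Gt C : Permutation z z' -> Mder v (z, Gt) C -> Mder v (z', Gt) C.
Proof. move=> Hp H. apply: M_stoup H _. split; [exact: Hp|exact: Forall2_refl]. Qed.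

Lemma M_prodR_list l : Mder v ([::], map TF l) (prodlist l).
Proof.
  elim: l => [|A l IH] /=; first exact: M_one.
  exact: (@M_prodR v [::] [:: TF A] [::] (map TF l) A (prodlist l) (M_ax v A) IH).
Qed.

Lemma M_prodL_list z D1 l D2 C : Mder v (z, D1 ++ map TF l ++ D2) C -> Mder v (z, D1 ++ TF (prodlist l) :: D2) C.
Proof.
  elim: l D1 => [|A l IH] D1 /= H; first exact: (@M_oneL v MHole z D1 D2 C H).
  apply: (@M_prodL v MHole z D1 A (prodlist l) D2 C). have := IH (D1 ++ [:: TF A]). rewrite -!catA /=. by apply.
Qed.

Lemma M_stoup1 A : Mder v ([:: A], [::]) A.
Proof. exact: (@M_bangP v MHole [::] [::] A [::] A (M_ax v A)). Qed.

Lemma M_stoup_prod l : Mder v (l, [::]) (prodlist l).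
Proof.
  elim: l => [|A l IH] /=; first exact: M_one.
  exact: (@M_prodR v [:: A] [::] l [::] A (prodlist l) (M_stoup1 A) IH).
Qed.

Lemma M_bangL_list z D1 l C : Mder v (z ++ l, D1) C -> Mder v (z, D1 ++ map TF (map Bang l)) C.
Proof.
  elim: l z => [|A l IH] z /= H; first by move: H; rewrite !cats0.
  apply: (@M_bangL v MHole z A D1 _ C). apply: IH. by rewrite -catA.
Qed.

Lemma M_apply z U V l r C : Mder v (z, U ++ map TF (codes l) ++ V) C ->
  Mder v (z, U ++ TF (Real (l, r)) :: map TF (codes r) ++ V) C.
Proof.
  move=> H. exact: (@M_overL v MHole [::] _ _ z U _ V C (M_prodR_list _) (M_prodL_list H)).
Qed.

Lemma M_usecopy z U D V C : Mder v (z, U ++ TF V :: D) C -> Mder v (z, U ++ TB [:: Binv V] [::] :: D) C.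
Proof.
  move=> H. have H1 := @M_binvL v MHole z U V D C H.
  exact: (@M_bangP v (MIn z U MHole D) [::] [::] (Binv V) [::] C H1).
Qed.

Lemma M_unpack15 z U D R C : Mder v (z, U ++ TF R :: D) C -> Mder v (z, U ++ TF (Prod One (Bang R)) :: D) C.
Proof.
  move=> H. apply: (@M_prodL v MHole). apply: (@M_oneL v MHole z U).
  apply: (@M_bangL v MHole). exact: (@M_bangP v MHole z U R D C H).
Qed.

Lemma M_unpack18 z U D R C : Mder v (z ++ [:: Tk], U ++ TF R :: D) C ->
  Mder v (z, U ++ TF (Prod (Bang Tk) (Bang R)) :: D) C.
Proof.
  move=> H. apply: (@M_prodL v MHole). apply: (@M_bangL v MHole z Tk U).
  apply: (@M_bangL v MHole (z ++ [:: Tk]) R U D). exact: (@M_bangP v MHole _ U R D C H).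
Qed.

Lemma M_token z U D C : Mder v (z, U ++ TB [::] [:: TB [::] [::]] :: D) C -> Mder v (z ++ [:: Tk], U ++ D) C.
Proof.
  move=> H.
  have H1 := @M_oneL v (MIn z U (MIn [::] [::] MHole [::]) D) [::] [::] [::] C H.
  have H2 := @M_diaL v (MIn z U MHole D) [::] [::] One [::] C H1.
  have H3 := @M_diaL v MHole z U (Dia One) D C H2.
  exact: (@M_bangP v MHole z U Tk D C H3).
Qed.

Lemma In_split_perm (A : formula) l : List.In A l -> exists l', Permutation l (l' ++ [:: A]).
Proof.
  move=> H. have [a [b E]] := List.in_split _ _ H. subst l. exists (a ++ b).
  apply: Permutation_trans (Permutation_sym (Permutation_middle a b A)) _. exact: (Permutation_app_comm [:: A] (a ++ b)).
Qed.

Lemma M_base fam : Mder v (Zs fam, [:: TF (Sf G)]) (Gl fam).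
Proof. exact: (@M_prodR v [::] [:: TF (Sf G)] (Zs fam) [::] _ _ (M_ax v _) (M_stoup_prod _)). Qed.

Lemma M_final fam w : Mder v (Zs fam, map TF (codes (map inl w))) (Gl fam) ->
  Mder v ([::], map TF (codes (map inl w))) (Mtarget fam).
Proof.
  move=> H. apply: M_overR. apply: (@M_prodL_list [::] _ (map Bang (Zs fam)) [::]).
  rewrite cats0. exact: M_bangL_list.
Qed.

Hypothesis HC15 : forall z A U D C, Mder v (z ++ [:: A], U ++ TB [:: A] [::] :: D) C ->
  Mder v (z ++ [:: A], U ++ D) C.

Lemma M_step15 x y : t0step (G:=G) x y ->
  Mder v (Zs false, map TF (codes x)) (Gl false) -> Mder v (Zs false, map TF (codes y)) (Gl false).
Proof.
  case=> u v' l r Hin. rewrite /codes !map_cat => H.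
  have HA : List.In (Ai false (l, r)) (Zs false).
    apply/List.in_app_iff; left. apply/List.in_map_iff. by exists (l, r).
  have [z0 Hp] := In_split_perm HA.
  apply: M_perm (Permutation_sym Hp) _. apply: HC15. apply: M_usecopy. apply: M_unpack15.
  apply: M_apply. exact: M_perm Hp H.
Qed.

Lemma M_complete15 w : t0language G w -> Mder v ([::], map TF (codes (map inl w))) (Mtarget false).
Proof.
  move=> Hw. apply: M_final.
  suff: forall x y, t0derives (G:=G) x y -> Mder v (Zs false, map TF (codes x)) (Gl false) ->
    Mder v (Zs false, map TF (codes y)) (Gl false).
    move=> /(_ _ _ Hw); apply. exact: M_base.
  move=> x y. elim=> // a b d Hs _ IH Ha. apply: IH. exact: M_step15 Hs Ha.
Qed.

Hypothesis HC18 : forall z A U D C, Mder v (z ++ [:: A], U ++ TB [:: A] [::] :: D) C ->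
  Mder v (z ++ [:: A], U ++ TB [::] [:: TB [::] [::]] :: D) C.

Lemma M_step18 x y : t0step (G:=G) x y ->
  Mder v (Zs true, map TF (codes x)) (Gl true) -> Mder v (Zs true, map TF (codes y)) (Gl true).
Proof.
  case=> u v' l r Hin. rewrite /codes !map_cat => H.
  have HA : List.In (Ai true (l, r)) (AZ true) by apply/List.in_map_iff; exists (l, r).
  have [z0 Hp] := In_split_perm HA.
  apply: M_token. apply: M_perm (Permutation_sym Hp) _. apply: HC18. apply: M_usecopy. apply: M_unpack18.
  apply: M_apply. apply: M_perm H. exact: Permutation_app_tail.
Qed.

Lemma M_complete18 w : t0language G w -> Mder v ([::], map TF (codes (map inl w))) (Mtarget true).
Proof.
  move=> Hw. apply: M_final.
  suff: forall x y, t0derives (G:=G) x y -> Mder v (Zs true, map TF (codes x)) (Gl true) ->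
    Mder v (Zs true, map TF (codes y)) (Gl true).
    move=> /(_ _ _ Hw); apply. exact: M_base.
  move=> x y. elim=> // a b d Hs _ IH Ha. apply: IH. exact: M_step18 Hs Ha.
Qed.
End MEnc.

Section FEnc.
Variable Sigma : finType.
Variable G : t0grammar Sigma.
Local Notation sym := (@sym Sigma G).
Local Notation Real := (@Real Sigma G).
Local Notation codes := (@codes Sigma G).
Local Notation Zs := (@Zs Sigma G).
Local Notation Gl := (@Gl Sigma G).
Variable v : fcalc.

Lemma Fconv X Y C : X = Y -> Fder v X C -> Fder v Y C. Proof. by move=> ->. Qed.

Lemma F_prodR_list l : Fder v (map FF l) (prodlist l).
Proof.
  elim: l => [|A l IH] /=; first exact: F_one.
  exact: (@F_prodR v [:: FF A] (map FF l) A (prodlist l) (F_ax v A) IH).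
Qed.

Lemma F_prodL_list D1 l D2 C : Fder v (D1 ++ map FF l ++ D2) C -> Fder v (D1 ++ FF (prodlist l) :: D2) C.
Proof.
  elim: l D1 => [|A l IH] D1 /= H; first exact: (@F_oneL v FHole D1 D2 C H).
  apply: (@F_prodL v FHole D1 A (prodlist l) D2 C). have := IH (D1 ++ [:: FF A]). rewrite -!catA /=. by apply.
Qed.

Lemma F_bang1 A : Fder v [:: FF (Bang A)] A.
Proof. exact: (@F_bangL v FHole [::] A [::] A (F_ax v A)). Qed.

Lemma F_fbangs_prod l : Fder v (fbangs l) (prodlist l).
Proof.
  elim: l => [|A l IH] /=; first exact: F_one.
  exact: (@F_prodR v [:: FF (Bang A)] (fbangs l) A (prodlist l) (F_bang1 A) IH).
Qed.

Lemma F_apply U V l r C : Fder v (U ++ map FF (codes l) ++ V) C ->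
  Fder v (U ++ FF (Real (l, r)) :: map FF (codes r) ++ V) C.
Proof. move=> H. exact: (@F_overL v FHole _ _ U _ V C (F_prodR_list _) (F_prodL_list H)). Qed.

Lemma F_moveR D1 A Phi D2 C : Fder v (D1 ++ FF (Bang A) :: Phi ++ D2) C -> Fder v (D1 ++ Phi ++ FF (Bang A) :: D2) C.
Proof. exact: (@F_bangP1 v FHole). Qed.
Lemma F_moveL D1 A Phi D2 C : Fder v (D1 ++ Phi ++ FF (Bang A) :: D2) C -> Fder v (D1 ++ FF (Bang A) :: Phi ++ D2) C.
Proof. exact: (@F_bangP2 v FHole). Qed.

Lemma F_usecopy D1 D2 V C : Fder v (D1 ++ FF V :: D2) C -> Fder v (D1 ++ FB [:: FF (Bang (Binv V))] :: D2) C.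
Proof.
  move=> H. have H1 := @F_binvL v FHole D1 V D2 C H.
  exact: (@F_bangL v (FIn D1 FHole D2) [::] (Binv V) [::] C H1).
Qed.

Lemma F_unpack15 U D R C : Fder v (U ++ FF R :: D) C -> Fder v (U ++ FF (Prod One (Bang R)) :: D) C.
Proof.
  move=> H. apply: (@F_prodL v FHole). apply: (@F_oneL v FHole U).
  exact: (@F_bangL v FHole U R D C H).
Qed.

Lemma F_unpack18 U D R C : Fder v (U ++ FF (Bang Tk) :: FF R :: D) C ->
  Fder v (U ++ FF (Prod (Bang Tk) (Bang R)) :: D) C.
Proof.
  move=> H. apply: (@F_prodL v FHole).
  have := @F_bangL v FHole (U ++ [:: FF (Bang Tk)]) R D C. rewrite -!catA /=. apply. exact: H.
Qed.

Lemma F_token U D C : Fder v (U ++ FB [:: FB [::]] :: D) C -> Fder v (U ++ FF (Bang Tk) :: D) C.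
Proof.
  move=> H.
  have H1 := @F_oneL v (FIn U (FIn [::] FHole [::]) D) [::] [::] C H.
  have H2 := @F_diaL v (FIn U FHole D) [::] One [::] C H1.
  have H3 := @F_diaL v FHole U (Dia One) D C H2.
  exact: (@F_bangL v FHole U Tk D C H3).
Qed.

Lemma fbangs_map l : map FF (map Bang l) = fbangs l.
Proof. by elim: l => //= A l ->. Qed.

Lemma F_base fam : Fder v (map FF (codes [:: inr (t0start G)]) ++ fbangs (Zs fam)) (Gl fam).
Proof. exact: (@F_prodR v [:: FF (Sf G)] (fbangs (Zs fam)) _ _ (F_ax v _) (F_fbangs_prod _)). Qed.

Lemma F_final fam w : Fder v (map FF (codes (map inl w)) ++ fbangs (Zs fam)) (Gl fam) ->
  Fder v (map FF (codes (map inl w))) (Mtarget G fam).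
Proof.
  move=> H. apply: F_overR. apply: (@F_prodL_list _ (map Bang (Zs fam)) [::]).
  by rewrite cats0 fbangs_map.
Qed.

Lemma F_step15 x y : v = F2015 -> t0step (G:=G) x y ->
  Fder v (map FF (codes x) ++ fbangs (Zs false)) (Gl false) ->
  Fder v (map FF (codes y) ++ fbangs (Zs false)) (Gl false).
Proof.
  move=> Ev. case=> u v' l r Hin. rewrite /codes !map_cat -!catA => H.
  set U := map FF (map (@code _ G) u) in H *. set V := map FF (map (@code _ G) v') in H *.
  set L := map FF (map (@code _ G) l) in H. set R := map FF (map (@code _ G) r).
  have HA : List.In (Ai false (l, r)) (Zs false).
    apply/List.in_app_iff; left. apply/List.in_map_iff. by exists (l, r).
  have [Z1 [Z2 EZ]] := List.in_split _ _ HA. rewrite EZ /fbangs map_cat /= -/(fbangs Z1) -/(fbangs Z2) in H *.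
  set A := Ai false (l, r) in H *. set W := V ++ fbangs Z1 ++ fbangs Z2.
  apply: (Fconv (X := [::] ++ (U ++ R ++ V ++ fbangs Z1) ++ FF (Bang A) :: fbangs Z2)); first by rewrite -!catA.
  apply: F_moveR. rewrite /=.
  have HC : Fder v (fbangs [:: A] ++ U ++ FB (fbangs [:: A] ++ [::]) :: R ++ W) (Gl false) ->
            Fder v (fbangs [:: A] ++ U ++ [::] ++ R ++ W) (Gl false).
    rewrite Ev. exact: (@F15_bangC FHole [:: A] U [::] (R ++ W) _ (fun E => ltac:(discriminate E))).
  apply: (Fconv (X := fbangs [:: A] ++ U ++ [::] ++ R ++ W)); first by rewrite /W /= -!catA.
  apply: HC. rewrite /=.
  apply: (Fconv (X := (FF (Bang A) :: U) ++ FB [:: FF (Bang (Binv (Vx false (l, r))))] :: R ++ W)); first by [].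
  apply: F_usecopy. apply: F_unpack15. rewrite /R. apply: F_apply.
  apply: (Fconv (X := [::] ++ FF (Bang A) :: (U ++ L ++ V ++ fbangs Z1) ++ fbangs Z2)); first by rewrite /W -!catA.
  apply: F_moveL. by rewrite -!catA.
Qed.

Lemma F_step18 x y : v = F2018 -> t0step (G:=G) x y ->
  Fder v (map FF (codes x) ++ fbangs (Zs true)) (Gl true) ->
  Fder v (map FF (codes y) ++ fbangs (Zs true)) (Gl true).
Proof.
  move=> Ev. case=> u v' l r Hin. rewrite /codes !map_cat -!catA => H.
  set U := map FF (map (@code _ G) u) in H *. set V := map FF (map (@code _ G) v') in H *.
  set L := map FF (map (@code _ G) l) in H. set R := map FF (map (@code _ G) r).
  have HA : List.In (Ai true (l, r)) (AZ G true) by apply/List.in_map_iff; exists (l, r).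
  have [Z1 [Z2 EZ]] := List.in_split _ _ HA.
  rewrite /Zs EZ /fbangs !map_cat /= -/(fbangs Z1) -/(fbangs Z2) -!catA /= in H *.
  set A := Ai true (l, r) in H *. set W := V ++ fbangs Z1 ++ fbangs Z2.
  apply: (Fconv (X := [::] ++ (U ++ R ++ V ++ fbangs Z1) ++ FF (Bang A) :: fbangs Z2 ++ [:: FF (Bang Tk)]));
    first by rewrite -!catA.
  apply: F_moveR. rewrite /=.
  apply: (Fconv (X := (FF (Bang A) :: U) ++ (R ++ W) ++ FF (Bang Tk) :: [::])); first by rewrite /W -!catA.
  apply: F_moveR. apply: F_token.
  have HC : Fder v (FF (Bang A) :: U ++ FB (FF (Bang A) :: [::]) :: R ++ W) (Gl true) ->
            Fder v (FF (Bang A) :: U ++ FB [:: FB [::]] :: R ++ W) (Gl true).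
    rewrite Ev. exact: (@F18_bangC FHole A U [::] (R ++ W) _).
  rewrite cats0. apply: HC.
  apply: (Fconv (X := (FF (Bang A) :: U) ++ FB [:: FF (Bang (Binv (Vx true (l, r))))] :: R ++ W)); first by [].
  apply: F_usecopy. apply: F_unpack18.
  apply: (Fconv (X := ((FF (Bang A) :: U) ++ [:: FF (Bang Tk)]) ++ FF (Real (l, r)) :: R ++ W));
    first by rewrite -!catA.
  rewrite /R. apply: F_apply. rewrite -!catA /=.
  have := @F_moveL (FF (Bang A) :: U) Tk (L ++ W) [::] (Gl true). rewrite cats0. apply.
  apply: (Fconv (X := [::] ++ FF (Bang A) :: (U ++ L ++ V ++ fbangs Z1) ++ fbangs Z2 ++ [:: FF (Bang Tk)]));
    first by rewrite /W -!catA.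
  apply: F_moveL. by rewrite -!catA.
Qed.

Lemma F_complete fam w : v = (if fam then F2018 else F2015) -> t0language G w ->
  Fder v (map FF (codes (map inl w))) (Mtarget G fam).
Proof.
  move=> Ev Hw. apply: F_final.
  suff: forall x y, t0derives (G:=G) x y -> Fder v (map FF (codes x) ++ fbangs (Zs fam)) (Gl fam) ->
    Fder v (map FF (codes y) ++ fbangs (Zs fam)) (Gl fam).
    move=> /(_ _ _ Hw); apply. exact: F_base.
  move=> x y. elim=> // a b d Hs _ IH Ha. apply: IH. case: fam Ev Ha => Ev Ha.
  exact: F_step18 Ev Hs Ha. exact: F_step15 Ev Hs Ha.
Qed.
End FEnc.

Lemma In_of_mem (T : eqType) (x : T) s : x \in s -> List.In x s.
Proof. elim: s => //= y s IH. rewrite in_cons => /orP [/eqP ->|H]; [by left|right; exact: IH]. Qed.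

Lemma tt_nostoup_st t : tt_nostoup t -> st_t t = [::].
Proof.
  elim/tterm_ind': t => [A|z Gt HG] //= [-> H] /=.
  elim: HG H => //= t l Pt _ IH [Ht Hl]. by rewrite Pt // IH.
Qed.

Section Main.
Variable Sigma : finType.
Variable G : t0grammar Sigma.

Definition lexl : seq (Sigma * formula) := [seq (a, @code Sigma G (inl a)) | a <- enum Sigma].
Definition gr (H : formula) : grammar Sigma := Grammar lexl H.

Lemma assigns_iff H w As : assigns (gr H) w As <-> As = @codes Sigma G (map inl w).
Proof.
  rewrite /assigns /=. split.
  - elim=> //= a A w0 As0 HA _ ->. move: HA => /List.in_map_iff [x [[<- <-] _]] //.
  - move=> ->. elim: w => //= a w IH. constructor=>//. apply/List.in_map_iff. exists a. split=>//.
    apply: In_of_mem. by rewrite mem_enum.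
Qed.

Lemma flat_mapTF As : mf_flat ([::], map TF As) = As.
Proof. by elim: As => //= A As IH; rewrite /mf_flat /= in IH *; rewrite IH. Qed.
Lemma flat_mapFF As : flatten (map ftt_flat (map FF As)) = As.
Proof. by elim: As => //= A As ->. Qed.

Lemma E_part c : forall w, t0language G w <-> E_accepts c (gr (Etarget G)) w.
Proof.
  move=> w. split.
  - move=> Hw. exists (@codes _ G (map inl w)). split; first exact/assigns_iff. exact: E_complete.
  - move=> [As [/assigns_iff -> HD]]. have := E_sound HD (csem_codes _). apply: target_sound.
    + move=> A /List.in_map_iff [lr [<- Hin]] /=. split=>//. exact: sem_Real.
    + move=> A /List.in_map_iff [lr [<- Hin]] u /= [] //.
Qed.

Definition famM (v : mcalc) := match v with M2015 | M2015' => false | _ => true end.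

Lemma M_compl v w : t0language G w -> Mder v ([::], map TF (@codes _ G (map inl w))) (Mtarget G (famM v)).
Proof.
  case: v => /=.
  - apply: M_complete15 => z A U D C H. exact: (@M15_bangC MHole z [:: A] U [::] D C (fun E => ltac:(discriminate E)) H).
  - apply: M_complete15 => z A U D C H. exact: (@M15'_bangC MHole z [:: A] [::] U [::] D C (fun E => ltac:(discriminate E)) H).
  - apply: M_complete18 => z A U D C H. exact: (@M18_bangC MHole z A U [::] D C H).
  - apply: M_complete18 => z A U D C H. exact: (@M18'_bangC MHole z A [::] U [::] D C H).
Qed.

Lemma M_snd v w X : mf_nostoup X -> mf_flat X = @codes Sigma G (map inl w) -> Mder v X (Mtarget G (famM v)) ->
  t0language G w.
Proof.
  move=> [E1 E2] Ef HD. have := M_sound HD (u := map inl w). move=> H.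
  apply: (@target_sound _ G _ _ w (PZs_sem (G:=G) (fam:=famM v)) (Zs_empty (G:=G) (fam:=famM v))).
  apply: H. split; first by rewrite E1.
  split.
  - have -> : stl X.2 = [::].
      elim: E2 => //= t l Ht _ IH. rewrite /stl /= in IH *. by rewrite tt_nostoup_st // IH.
    by move=> A [].
  - rewrite /fl. rewrite /mf_flat in Ef. rewrite Ef. exact: csem_codes.
Qed.

Definition famF (v : fcalc) := match v with F2015 => false | F2018 => true end.

Lemma F_snd v w X : flatten (map ftt_flat X) = @codes Sigma G (map inl w) -> Fder v X (Mtarget G (famF v)) ->
  t0language G w.
Proof.
  move=> Ef HD. have := F_sound HD (u := map inl w). move=> H.
  apply: (@target_sound _ G _ _ w (PZs_sem (G:=G) (fam:=famF v)) (Zs_empty (G:=G) (fam:=famF v))).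
  apply: H. rewrite /fsem /ffl Ef. exact: csem_codes.
Qed.
End Main.

Unset Implicit Arguments.

Theorem theorem11 (Sigma : finType) (M : seq Sigma -> Prop) :
  recursively_enumerable M ->
  (exists g : grammar Sigma, E_generates Emult g M) /\
  (exists g : grammar Sigma, E_generates Ermult g M) /\
  (forall v : mcalc, exists g : grammar Sigma,
      M_s_generates v g M /\ M_t_generates v g M) /\
  (forall v : fcalc, exists g : grammar Sigma,
      F_s_generates v g M /\ F_t_generates v g M).
Proof.
  move=> [G HG]. split; [|split; [|split]].
  - exists (gr G (Etarget G)) => w. rewrite HG. exact: E_part.
  - exists (gr G (Etarget G)) => w. rewrite HG. exact: E_part.
  - move=> v. exists (gr G (Mtarget G (famM v))). split=> w; rewrite HG; split.
    + move=> Hw. exists (@codes _ G (map inl w)). split; first exact/assigns_iff. exact: M_compl.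
    + move=> [As [/assigns_iff -> HD]]. apply: M_snd HD. split=>//. by elim: (codes _) => //= A0 As0 IH; constructor.
      exact: flat_mapTF.
    + move=> Hw. exists (@codes _ G (map inl w)), ([::], map TF (@codes _ G (map inl w))).
      split; first exact/assigns_iff. split. split=>//. by elim: (codes _) => //= A0 As0 IH; constructor.
      split; [exact: flat_mapTF|exact: M_compl].
    + move=> [As [Pi [/assigns_iff -> [HN [Hf HD]]]]]. exact: M_snd HN Hf HD.
  - move=> v. exists (gr G (Mtarget G (famF v))). split=> w; rewrite HG; split.
    + move=> Hw. exists (@codes _ G (map inl w)). split; first exact/assigns_iff.
      apply: F_complete Hw. by case: v.
    + move=> [As [/assigns_iff -> HD]]. apply: F_snd HD. exact: flat_mapFF.
    + move=> Hw. exists (@codes _ G (map inl w)), (map FF (@codes _ G (map inl w))).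
      split; first exact/assigns_iff. split; first exact: flat_mapFF.
      apply: F_complete Hw. by case: v.
    + move=> [As [Pi [/assigns_iff -> [Hf HD]]]]. exact: F_snd Hf HD.
Qed.
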